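(* Let $(X,d_X)$ and $(Y,d_Y)$ be metric spaces. Every distance-increasing, partial distance-preserving metric $d$ on $X\times Y$ induces the product topology on $X\times Y$.
   Context: A metric $d$ on $X\times Y$ is distance-increasing if $d((x_1,y_1),(x_2,y_2))\le d((x_3,y_3),(x_4,y_4))$ whenever $d_X(x_1,x_2)\le d_X(x_3,x_4)$ and $d_Y(y_1,y_2)\le d_Y(y_3,y_4)$; it is partial distance-preserving if $d((x_1,y),(x_2,y))=d_X(x_1,x_2)$ and $d((x,y_1),(x,y_2))=d_Y(y_1,y_2)$ for all $x,x_1,x_2\in X$, $y,y_1,y_2\in Y$. *)

(* Defs.v *)
From Stdlib Require Import Reals.
Open Scope R_scope.

Definition is_metric {T : Type} (d : T -> T -> R) : Prop :=
  (forall x y, 0 <= d x y) /\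
  (forall x y, d x y = 0 <-> x = y) /\
  (forall x y, d x y = d y x) /\
  (forall x y z, d x z <= d x y + d y z).

Definition metric_open {T : Type} (d : T -> T -> R) (U : T -> Prop) : Prop :=
  forall x, U x -> exists eps, 0 < eps /\ forall y, d x y < eps -> U y.

(* Open sets of the product topology on X * Y, where X and Y carry the
   metric topologies of dX and dY: the topology generated by the basis of
   open rectangles U x V, i.e. W is open iff every point of W lies in an
   open rectangle contained in W. *)
Definition product_open {X Y : Type} (dX : X -> X -> R) (dY : Y -> Y -> R)
  (W : X * Y -> Prop) : Prop :=
  forall p, W p -> exists (U : X -> Prop) (V : Y -> Prop),
    metric_open dX U /\ metric_open dY V /\ U (fst p) /\ V (snd p) /\
    (forall x y, U x -> V y -> W (x, y)).

Definition distance_increasing {X Y : Type} (dX : X -> X -> R) (dY : Y -> Y -> R)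
  (d : X * Y -> X * Y -> R) : Prop :=
  forall x1 x2 x3 x4 y1 y2 y3 y4,
    dX x1 x2 <= dX x3 x4 -> dY y1 y2 <= dY y3 y4 ->
    d (x1, y1) (x2, y2) <= d (x3, y3) (x4, y4).

Definition partial_distance_preserving {X Y : Type} (dX : X -> X -> R)
  (dY : Y -> Y -> R) (d : X * Y -> X * Y -> R) : Prop :=
  (forall x1 x2 y, d (x1, y) (x2, y) = dX x1 x2) /\
  (forall x y1 y2, d (x, y1) (x, y2) = dY y1 y2).

(* Main.v *)
Require Import Defs.
From Stdlib Require Import Reals Lra.
Open Scope R_scope.

Lemma ball_open {T : Type} (d : T -> T -> R) (x : T) (r : R) :
  is_metric d -> metric_open d (fun z => d x z < r).
Proof.
  intros [H0 [H1 [H2 H3]]] z Hz.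
  exists (r - d x z). split; [lra|].
  intros w Hw. specialize (H3 x z w). lra.
Qed.

Theorem corollary3p5 (X Y : Type) (dX : X -> X -> R) (dY : Y -> Y -> R)
  (d : X * Y -> X * Y -> R) :
  is_metric dX -> is_metric dY -> is_metric d ->
  distance_increasing dX dY d -> partial_distance_preserving dX dY d ->
  forall W : X * Y -> Prop, metric_open d W <-> product_open dX dY W.
Proof.
  intros MX MY Md DI [PX PY] W. split.
  - intros HW [x y] Hp.
    destruct (HW _ Hp) as [eps [Heps Hb]].
    exists (fun z => dX x z < eps/2), (fun z => dY y z < eps/2).
    split; [apply ball_open; auto|].
    split; [apply ball_open; auto|].
    simpl. destruct MX as [X0 [X1 _]]. destruct MY as [Y0 [Y1 _]].
    assert (dX x x = 0) by (apply X1; reflexivity).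
    assert (dY y y = 0) by (apply Y1; reflexivity).
    split; [lra|]. split; [lra|].
    intros x' y' Hx Hy. apply Hb.
    destruct Md as [_ [_ [_ T3]]].
    pose proof (T3 (x,y) (x',y) (x',y')) as T.
    rewrite PX, PY in T. lra.
  - intros HW [x y] Hp.
    destruct (HW _ Hp) as [U [V [HU [HV [Ux [Vy Hsub]]]]]].
    simpl in Ux, Vy.
    destruct (HU _ Ux) as [e1 [He1 Hb1]].
    destruct (HV _ Vy) as [e2 [He2 Hb2]].
    exists (Rmin e1 e2). split; [apply Rmin_pos; auto|].
    intros [x' y'] Hq. apply Hsub.
    + apply Hb1.
      assert (dX x x' <= d (x,y) (x',y')).
      { rewrite <- (PX x x' y). apply DI; [lra|].
        destruct MY as [Y0 [Y1 _]].
        assert (dY y y = 0) by (apply Y1; reflexivity).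
        rewrite H; apply Y0. }
      pose proof (Rmin_l e1 e2). lra.
    + apply Hb2.
      assert (dY y y' <= d (x,y) (x',y')).
      { rewrite <- (PY x y y'). apply DI; [|lra].
        destruct MX as [X0 [X1 _]].
        assert (dX x x = 0) by (apply X1; reflexivity).
        rewrite H; apply X0. }
      pose proof (Rmin_r e1 e2). lra.
Qed.
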